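(* Let $f$ be an entire function on $\mathbb{C}$ which is not identically zero. Then the vector-valued holomorphic functions $\Phi_f$ and $\Psi_f$ on $\mathbb{C}^k$ are not identically zero.
   Context: Fix an integer $k\ge 2$. Use coordinates $s=(s_1,\dots,s_k)$ on $\mathbb{C}^k$, set $s_0:=1$, $P_s(z):=\sum_{h=0}^k(-1)^hs_hz^{k-h}$ and $P_s'(z):=\partial_zP_s(z)$. Let $E(z):=(1,z,\dots,z^{k-1})^T$. For an entire function $f$, define the $\mathbb{C}^k$-valued holomorphic functions $$\Phi_f(s):=\frac{1}{2i\pi}\int_{|\zeta|=R}\frac{f(\zeta)E(\zeta)\,d\zeta}{P_s(\zeta)},\qquad \Psi_f(s):=\frac{1}{2i\pi}\int_{|\zeta|=R}\frac{f(\zeta)E(\zeta)P'_s(\zeta)\,d\zeta}{P_s(\zeta)},$$ where $R$ is large enough that all roots of $P_s$ lie in $\{|\zeta|<R\}$ (the integrals do not depend on such $R$). *)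

(* Defs.v *)
From Stdlib Require Import Reals.
From Coquelicot Require Import Coquelicot.
Open Scope C_scope.

Fixpoint Csum (n : nat) (g : nat -> C) : C :=
  match n with
  | O => 0
  | S m => Csum m g + g m
  end.

Definition entire (f : C -> C) : Prop := forall z : C, ex_derive f z.

(* coordinates s = (s_1,...,s_k) given as s : nat -> C (only s 1..s k used);
   s_0 := 1 *)
Definition sext (s : nat -> C) (h : nat) : C :=
  match h with O => 1 | _ => s h end.

Definition Ps (k : nat) (s : nat -> C) (z : C) : C :=
  Csum (S k) (fun h => (-1) ^ h * sext s h * z ^ (k - h)).

Definition dPs (k : nat) (s : nat -> C) (z : C) : C :=
  Csum k (fun h => (-1) ^ h * sext s h * RtoC (INR (k - h)) * z ^ (k - h - 1)).

(* (1/(2 i pi)) \int_{|zeta| = R} g(zeta) d zeta, circle positively oriented,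
   parametrized by zeta = R e^{it}, t in [0, 2 pi] *)
Definition circle_integral (Rad : R) (g : C -> C) : C :=
  / ((0, 2 * PI)%R : C) *
  @RInt C_R_CompleteNormedModule
    (fun t : R => g ((Rad * cos t)%R, (Rad * sin t)%R) *
                  ((- (Rad * sin t))%R, (Rad * cos t)%R)) 0 (2 * PI).

(* j-th component (0 <= j < k) of Phi_f(s), E(z) = (1, z, ..., z^(k-1)) *)
Definition Phi (f : C -> C) (k : nat) (s : nat -> C) (Rad : R) (j : nat) : C :=
  circle_integral Rad (fun zeta => f zeta * zeta ^ j / Ps k s zeta).

Definition Psi (f : C -> C) (k : nat) (s : nat -> C) (Rad : R) (j : nat) : C :=
  circle_integral Rad (fun zeta => f zeta * zeta ^ j * dPs k s zeta / Ps k s zeta).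

Definition admissible (k : nat) (s : nat -> C) (Rad : R) : Prop :=
  (0 < Rad)%R /\ forall z : C, Ps k s z = 0 -> (Cmod z < Rad)%R.

(* Main.v *)
Require Import Defs.
From Stdlib Require Import Reals.
From Coquelicot Require Import Coquelicot.
From Stdlib Require Import Lra Lia Classical ClassicalEpsilon ZArith.
Open Scope C_scope.

Lemma dC_pair (u v : R -> R) (x du dv : R) :
  is_derive u x du -> is_derive v x dv ->
  @is_derive R_AbsRing C_R_NormedModule (fun t => (u t, v t) : C) x ((du, dv) : C).
Proof.
  intros Hu Hv.
  assert (H := @is_derive_plus R_AbsRing C_R_NormedModule _ _ x _ _
     (@is_derive_scal_l R_AbsRing C_R_NormedModule u x du ((1,0)%R : C) Hu)
     (@is_derive_scal_l R_AbsRing C_R_NormedModule v x dv ((0,1)%R : C) Hv)).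
  replace ((du,dv) : C) with (plus (scal du ((1,0)%R:C)) (scal dv ((0,1)%R : C)) : C_R_NormedModule).
  - eapply is_derive_ext; [|exact H]. intros t. simpl.
    unfold plus, scal; simpl. unfold prod_plus, prod_scal; simpl.
    unfold plus, scal, mult; simpl. f_equal; unfold mult; simpl; ring.
  - simpl. unfold plus, scal; simpl. unfold prod_plus, prod_scal; simpl.
    unfold plus, scal, mult; simpl. f_equal; unfold mult; simpl; ring.
Qed.

Lemma dC_fst (F : R -> C) (x : R) (l : C) :
  @is_derive R_AbsRing C_R_NormedModule F x l -> is_derive (fun t => fst (F t)) x (fst l).
Proof.
  intros H. unfold is_derive in *.
  eapply filterdiff_ext_lin.
  - eapply filterdiff_comp; [exact H|].
    apply (@filterdiff_linear R_AbsRing C_R_NormedModule R_NormedModule _ (fun t : C => fst t)).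
    apply (@is_linear_fst R_AbsRing R_NormedModule R_NormedModule).
  - intros y. simpl. reflexivity.
Qed.

Lemma dC_snd (F : R -> C) (x : R) (l : C) :
  @is_derive R_AbsRing C_R_NormedModule F x l -> is_derive (fun t => snd (F t)) x (snd l).
Proof.
  intros H. unfold is_derive in *.
  eapply filterdiff_ext_lin.
  - eapply filterdiff_comp; [exact H|].
    apply (@filterdiff_linear R_AbsRing C_R_NormedModule R_NormedModule _ (fun t : C => snd t)).
    apply (@is_linear_snd R_AbsRing R_NormedModule R_NormedModule).
  - intros y. simpl. reflexivity.
Qed.

Lemma dR_mm (a b c d : R -> R) x da db dc dd :
  is_derive a x da -> is_derive b x db -> is_derive c x dc -> is_derive d x dd ->
  is_derive (fun t => a t * b t - c t * d t)%R x ((da * b x + a x * db) - (dc * d x + c x * dd))%R.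
Proof.
  intros Ha Hb Hc Hd. apply is_derive_Reals.
  apply (derivable_pt_lim_minus (fun t => a t * b t)%R (fun t => c t * d t)%R);
  apply derivable_pt_lim_mult; apply is_derive_Reals; auto.
Qed.

Lemma dR_mp (a b c d : R -> R) x da db dc dd :
  is_derive a x da -> is_derive b x db -> is_derive c x dc -> is_derive d x dd ->
  is_derive (fun t => a t * b t + c t * d t)%R x ((da * b x + a x * db) + (dc * d x + c x * dd))%R.
Proof.
  intros Ha Hb Hc Hd. apply is_derive_Reals.
  apply (derivable_pt_lim_plus (fun t => a t * b t)%R (fun t => c t * d t)%R);
  apply derivable_pt_lim_mult; apply is_derive_Reals; auto.
Qed.

Lemma dC_mult (u v : R -> C) (x : R) (du dv : C) :
  @is_derive R_AbsRing C_R_NormedModule u x du ->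
  @is_derive R_AbsRing C_R_NormedModule v x dv ->
  @is_derive R_AbsRing C_R_NormedModule (fun t => u t * v t) x (du * v x + u x * dv).
Proof.
  intros Hu Hv.
  pose proof (dC_fst _ _ _ Hu) as Hu1. pose proof (dC_snd _ _ _ Hu) as Hu2.
  pose proof (dC_fst _ _ _ Hv) as Hv1. pose proof (dC_snd _ _ _ Hv) as Hv2.
  eapply is_derive_ext with (f := fun t => ((fst (u t) * fst (v t) - snd (u t) * snd (v t))%R,
                                          (fst (u t) * snd (v t) + snd (u t) * fst (v t))%R) : C).
  - intros t. destruct (u t), (v t). reflexivity.
  - replace (du * v x + u x * dv) with
      (((fst du * fst (v x) + fst (u x) * fst dv) - (snd du * snd (v x) + snd (u x) * snd dv))%R,
       ((fst du * snd (v x) + fst (u x) * snd dv) + (snd du * fst (v x) + snd (u x) * fst dv))%R).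
    + apply dC_pair.
      * apply dR_mm; auto.
      * apply dR_mp; auto.
    + destruct du, dv, (u x), (v x). unfold Cmult, Cplus; simpl. f_equal; ring.
Qed.

Lemma Cmod_le_sum (z : C) : (Cmod z <= Rabs (fst z) + Rabs (snd z))%R.
Proof.
  destruct z as [x y]. unfold Cmod; simpl.
  rewrite <- (sqrt_Rsqr (Rabs x + Rabs y)) by (pose proof (Rabs_pos x); pose proof (Rabs_pos y); lra).
  apply sqrt_le_1_alt. unfold Rsqr.
  pose proof (Rabs_pos x); pose proof (Rabs_pos y).
  assert (Ex : (x*(x*1) = Rabs x * Rabs x)%R) by (rewrite Rmult_1_r, <- Rabs_mult; symmetry; apply Rabs_pos_eq; nra).
  assert (Ey : (y*(y*1) = Rabs y * Rabs y)%R) by (rewrite Rmult_1_r, <- Rabs_mult; symmetry; apply Rabs_pos_eq; nra).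
  simpl. rewrite Ex, Ey. nra.
Qed.

Lemma Rabs_fst_le (z : C) : (Rabs (fst z) <= Cmod z)%R.
Proof. apply re_le_Cmod. Qed.

Lemma Rabs_snd_le (z : C) : (Rabs (snd z) <= Cmod z)%R.
Proof.
  destruct z as [x y]. unfold Cmod; simpl.
  rewrite <- sqrt_Rsqr_abs. apply sqrt_le_1_alt. unfold Rsqr. nra.
Qed.

Definition CcontR (F : R -> C) (x : R) : Prop :=
  forall eps, (0 < eps)%R -> exists del, (0 < del)%R /\
    forall t, (Rabs (t - x) < del)%R -> (Cmod (F t - F x) < eps)%R.

Lemma CcontR_continuous (F : R -> C) x : CcontR F x ->
  @continuous R_UniformSpace (CompleteNormedModule.UniformSpace R_AbsRing C_R_CompleteNormedModule) F x.
Proof.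
  intros H. unfold continuous. apply filterlim_locally. intros eps.
  destruct (H eps (cond_pos eps)) as [d [Hd Ht]].
  exists (mkposreal d Hd). intros t Hdt. simpl. specialize (Ht t Hdt).
  split; simpl; unfold AbsRing_ball, abs, minus, plus, opp; simpl.
  - eapply Rle_lt_trans; [|exact Ht]. 
    eapply Rle_trans; [|apply (Rabs_fst_le (F t - F x))]. right. reflexivity.
  - eapply Rle_lt_trans; [|exact Ht].
    eapply Rle_trans; [|apply (Rabs_snd_le (F t - F x))]. right. reflexivity.
Qed.

Lemma continuous_CcontR (F : R -> C) x :
  @continuous R_UniformSpace (CompleteNormedModule.UniformSpace R_AbsRing C_R_CompleteNormedModule) F x -> CcontR F x.
Proof.
  intros H eps Heps. unfold continuous in H.
  assert (He2 : (0 < eps / 2)%R) by lra.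
  destruct (proj1 (filterlim_locally _ _) H (mkposreal _ He2)) as [d Hd].
  exists d. split; [apply cond_pos|]. intros t Ht. specialize (Hd t Ht).
  destruct Hd as [H1 H2]. unfold ball in H1, H2. simpl in H1, H2. unfold AbsRing_ball, abs, minus, plus, opp in H1, H2; simpl in H1, H2.
  eapply Rle_lt_trans; [apply Cmod_le_sum|]. simpl. lra.
Qed.

Lemma derive_CcontR (F : R -> C) x l :
  @is_derive R_AbsRing C_R_NormedModule F x l -> CcontR F x.
Proof.
  intros H. apply continuous_CcontR.
  apply (@ex_derive_continuous R_AbsRing C_R_NormedModule). exists l. exact H.
Qed.
Definition Cdiff (h : C -> C) (z l : C) : Prop :=
  forall eta, (0 < eta)%R -> exists rho, (0 < rho)%R /\
    forall w, (Cmod (w - z) < rho)%R -> (Cmod (h w - h z - l * (w - z)) <= eta * Cmod (w - z))%R.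

Definition Ccont (h : C -> C) (z : C) : Prop :=
  forall eps, (0 < eps)%R -> exists del, (0 < del)%R /\
    forall w, (Cmod (w - z) < del)%R -> (Cmod (h w - h z) < eps)%R.

Lemma Cdiff_Ccont h z l : Cdiff h z l -> Ccont h z.
Proof.
  intros H eps Heps.
  destruct (H 1%R Rlt_0_1) as [r [Hr Hw]].
  set (K := (Cmod l + 1)%R).
  assert (HK : (0 < K)%R) by (unfold K; pose proof (Cmod_ge_0 l); lra).
  exists (Rmin r (eps / K)). split.
  { apply Rmin_pos; auto. apply Rdiv_lt_0_compat; auto. }
  intros w Hwz. specialize (Hw w (Rlt_le_trans _ _ _ Hwz (Rmin_l _ _))).
  replace (h w - h z) with ((h w - h z - l * (w - z)) + l * (w - z)) by ring.
  eapply Rle_lt_trans; [apply Cmod_triangle|]. rewrite Cmod_mult.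
  assert (Cmod (w - z) < eps / K)%R by (eapply Rlt_le_trans; [exact Hwz|apply Rmin_r]).
  assert (Cmod (w - z) * K < eps)%R.
  { apply (Rmult_lt_compat_r K) in H0; auto. unfold Rdiv in H0. rewrite Rmult_assoc, Rinv_l in H0; lra. }
  unfold K in H1. pose proof (Cmod_ge_0 (w - z)). nra.
Qed.

Lemma CcontR_const (c : C) x : CcontR (fun _ => c) x.
Proof.
  intros eps Heps. exists 1%R. split; [lra|]. intros t _.
  replace (c - c) with (RtoC 0) by ring. rewrite Cmod_0. exact Heps.
Qed.

Lemma CcontR_plus F G x : CcontR F x -> CcontR G x -> CcontR (fun t => F t + G t) x.
Proof.
  intros HF HG eps Heps.
  destruct (HF (eps/2)%R ltac:(lra)) as [d1 [Hd1 H1]].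
  destruct (HG (eps/2)%R ltac:(lra)) as [d2 [Hd2 H2]].
  exists (Rmin d1 d2). split; [apply Rmin_pos; auto|]. intros t Ht.
  specialize (H1 t (Rlt_le_trans _ _ _ Ht (Rmin_l _ _))).
  specialize (H2 t (Rlt_le_trans _ _ _ Ht (Rmin_r _ _))).
  replace (F t + G t - (F x + G x)) with ((F t - F x) + (G t - G x)) by ring.
  eapply Rle_lt_trans; [apply Cmod_triangle|]. lra.
Qed.

Lemma CcontR_opp F x : CcontR F x -> CcontR (fun t => - F t) x.
Proof.
  intros HF eps Heps. destruct (HF eps Heps) as [d [Hd H]]. exists d; split; auto.
  intros t Ht. replace (- F t - - F x) with (- (F t - F x)) by ring. rewrite Cmod_opp. auto.
Qed.

Lemma CcontR_minus F G x : CcontR F x -> CcontR G x -> CcontR (fun t => F t - G t) x.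
Proof. intros. apply CcontR_plus; auto. apply CcontR_opp; auto. Qed.

Lemma CcontR_mult F G x : CcontR F x -> CcontR G x -> CcontR (fun t => F t * G t) x.
Proof.
  intros HF HG eps Heps.
  set (A := (Cmod (F x) + 1)%R). set (B := (Cmod (G x) + 1)%R).
  assert (HA : (0 < A)%R) by (unfold A; pose proof (Cmod_ge_0 (F x)); lra).
  assert (HB : (0 < B)%R) by (unfold B; pose proof (Cmod_ge_0 (G x)); lra).
  set (e := Rmin 1 (eps / (A + B))).
  assert (He : (0 < e)%R) by (apply Rmin_pos; [lra|apply Rdiv_lt_0_compat; lra]).
  destruct (HF e He) as [d1 [Hd1 H1]].
  destruct (HG e He) as [d2 [Hd2 H2]].
  exists (Rmin d1 d2). split; [apply Rmin_pos; auto|]. intros t Ht.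
  specialize (H1 t (Rlt_le_trans _ _ _ Ht (Rmin_l _ _))).
  specialize (H2 t (Rlt_le_trans _ _ _ Ht (Rmin_r _ _))).
  replace (F t * G t - F x * G x) with ((F t - F x) * G t + F x * (G t - G x)) by ring.
  eapply Rle_lt_trans; [apply Cmod_triangle|]. rewrite !Cmod_mult.
  assert (HGt : (Cmod (G t) <= B)%R).
  { replace (G t) with ((G t - G x) + G x) by ring. eapply Rle_trans; [apply Cmod_triangle|].
    unfold B. assert (e <= 1)%R by apply Rmin_l. lra. }
  assert (He2 : (e * (A + B) <= eps)%R).
  { assert (e <= eps / (A+B))%R by apply Rmin_r.
    apply (Rmult_le_compat_r (A + B)) in H; [|lra]. unfold Rdiv in H.
    rewrite Rmult_assoc, Rinv_l in H; lra. }
  pose proof (Cmod_ge_0 (F t - F x)). pose proof (Cmod_ge_0 (G t - G x)).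
  pose proof (Cmod_ge_0 (G t)). pose proof (Cmod_ge_0 (F x)).
  assert (Cmod (F x) <= A)%R by (unfold A; lra).
  assert (Cmod (F t - F x) * Cmod (G t) <= e * B)%R by (apply Rmult_le_compat; lra).
  assert (Cmod (F x) * Cmod (G t - G x) <= A * e)%R by (apply Rmult_le_compat; lra).
  assert (Cmod (F x) * Cmod (G t - G x) < A * e \/ Cmod (F t - F x) * Cmod (G t) < e * B)%R.
  { left. apply Rle_lt_trans with (Cmod (F x) * e)%R.
    - apply Rmult_le_compat_l; lra.
    - apply Rmult_lt_compat_r; [lra|]. unfold A; lra. }
  nra.
Qed.

Lemma CcontR_comp (h : C -> C) F x : CcontR F x -> Ccont h (F x) -> CcontR (fun t => h (F t)) x.
Proof.
  intros HF Hh eps Heps. destruct (Hh eps Heps) as [d [Hd H1]].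
  destruct (HF d Hd) as [d' [Hd' H2]]. exists d'. split; auto.
Qed.
Lemma Cdiff_of_derive (f : C -> C) z l : is_derive f z l -> Cdiff f z l.
Proof.
  intros Hl eta Heta. unfold is_derive, filterdiff in Hl. destruct Hl as [_ Hl].
  specialize (Hl z (fun P H => H)). unfold is_domin in Hl.
  specialize (Hl (mkposreal eta Heta)). simpl in Hl.
  destruct Hl as [e He]. exists e. split; [apply cond_pos|].
  intros w Hw. specialize (He w). unfold ball in He. simpl in He.
  unfold AbsRing_ball, norm, abs, minus, plus, opp, scal in He; simpl in He.
  unfold Cminus. specialize (He Hw). unfold mult, abs in He; simpl in He. rewrite (Cmult_comm l). exact He.
Qed.

Lemma entire_Cdiff f : entire f -> forall z, exists l, Cdiff f z l.
Proof. intros H z. destruct (H z) as [l Hl]. exists l. apply Cdiff_of_derive; auto. Qed.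

Lemma Cmod_lt_half (u v : C) : (Cmod (u - v) < Cmod v / 2)%R -> (Cmod v / 2 <= Cmod u)%R.
Proof.
  intros H. assert (Cmod v <= Cmod (v - u) + Cmod u)%R.
  { replace v with ((v - u) + u) at 1 by ring. apply Cmod_triangle. }
  replace (v - u) with (- (u - v)) in H0 by ring. rewrite Cmod_opp in H0. lra.
Qed.

Lemma Cdiff_inv (a z : C) : z <> a -> Cdiff (fun w => / (w - a)) z (- (/ (z - a)) ^ 2).
Proof.
  intros Hz eta Heta.
  set (v := z - a). assert (Hv : v <> 0) by (unfold v; intro E; apply Hz; 
    replace z with ((z - a) + a) by ring; rewrite E; ring).
  assert (Hmv : (0 < Cmod v)%R) by (apply Cmod_gt_0; auto).
  exists (Rmin (Cmod v / 2) (eta * Cmod v ^ 3 / 2)). split.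
  { apply Rmin_pos; [lra|]. apply Rdiv_lt_0_compat; [|lra]. apply Rmult_lt_0_compat; auto. apply pow_lt; auto. }
  intros w Hw. set (u := w - a).
  assert (Huv : w - z = u - v) by (unfold u, v; ring). rewrite Huv in *.
  assert (H1 : (Cmod (u - v) < Cmod v / 2)%R) by (eapply Rlt_le_trans; [exact Hw|apply Rmin_l]).
  assert (H2 : (Cmod (u - v) < eta * Cmod v ^ 3 / 2)%R) by (eapply Rlt_le_trans; [exact Hw|apply Rmin_r]).
  pose proof (Cmod_lt_half u v H1) as Hu.
  assert (Hu0 : u <> 0) by (intro E; rewrite E, Cmod_0 in Hu; lra).
  replace (/ u - / v - - (/ v) ^ 2 * (u - v)) with ((u - v) * (u - v) / (u * v ^ 2)) by (field; auto).
  unfold Cdiv. rewrite !Cmod_mult, Cmod_inv, Cmod_mult, Cmod_pow.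
  2:{ apply Cmult_neq_0; auto. apply Cpow_nz; auto. }
  pose proof (Cmod_ge_0 (u - v)).
  assert (Hden : (Cmod v ^ 3 / 2 <= Cmod u * Cmod v ^ 2)%R).
  { simpl. assert (0 <= Cmod v * Cmod v)%R by nra. nra. }
  assert (Hp : (0 < Cmod u * Cmod v ^ 2)%R) by (apply Rmult_lt_0_compat; [lra|apply pow_lt; auto]).
  apply Rle_trans with (Cmod (u - v) * (Cmod (u - v) * / (Cmod u * Cmod v ^ 2)))%R; [right; ring|].
  rewrite (Rmult_comm eta). apply Rmult_le_compat_l; auto.
  apply Rle_trans with (Cmod (u - v) * / (Cmod v ^ 3 / 2))%R.
  - apply Rmult_le_compat_l; auto. apply Rinv_le_contravar; auto.
    apply Rdiv_lt_0_compat; [apply pow_lt; auto|lra].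
  - assert (Hc : (0 < Cmod v ^ 3 / 2)%R) by (apply Rdiv_lt_0_compat; [apply pow_lt; auto|lra]).
    apply (Rmult_le_reg_r (Cmod v ^ 3 / 2)); auto. rewrite Rmult_assoc, Rinv_l by lra. lra.
Qed.
Lemma Cdiff_mult f g z lf lg : Cdiff f z lf -> Cdiff g z lg ->
  Cdiff (fun w => f w * g w) z (lf * g z + f z * lg).
Proof.
  intros Hf Hg eta Heta.
  set (A := (Cmod (f z) + 1)%R). set (B := (Cmod (g z) + 1)%R). set (L := (Cmod lf)%R).
  assert (HA : (0 < A)%R) by (unfold A; pose proof (Cmod_ge_0 (f z)); lra).
  assert (HB : (0 < B)%R) by (unfold B; pose proof (Cmod_ge_0 (g z)); lra).
  assert (HL : (0 <= L)%R) by apply Cmod_ge_0.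
  set (e := Rmin 1 (eta / (A + B + L))).
  assert (He : (0 < e)%R) by (apply Rmin_pos; [lra|apply Rdiv_lt_0_compat; lra]).
  assert (He1 : (e <= 1)%R) by apply Rmin_l.
  assert (He2 : (e * (A + B + L) <= eta)%R).
  { assert (e <= eta / (A+B+L))%R by apply Rmin_r.
    apply (Rmult_le_compat_r (A + B + L)) in H; [|lra]. unfold Rdiv in H.
    rewrite Rmult_assoc, Rinv_l in H; lra. }
  destruct (Hf e He) as [r1 [Hr1 H1]].
  destruct (Hg e He) as [r2 [Hr2 H2]].
  destruct (Cdiff_Ccont g z lg Hg e He) as [r3 [Hr3 H3]].
  exists (Rmin r1 (Rmin r2 r3)). split; [repeat apply Rmin_pos; auto|].
  intros w Hw.
  assert (Hw1 : (Cmod (w - z) < r1)%R) by (eapply Rlt_le_trans; [exact Hw|apply Rmin_l]).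
  assert (Hw2 : (Cmod (w - z) < r2)%R) by (eapply Rlt_le_trans; [exact Hw|eapply Rle_trans; [apply Rmin_r|apply Rmin_l]]).
  assert (Hw3 : (Cmod (w - z) < r3)%R) by (eapply Rlt_le_trans; [exact Hw|eapply Rle_trans; [apply Rmin_r|apply Rmin_r]]).
  specialize (H1 w Hw1). specialize (H2 w Hw2). specialize (H3 w Hw3).
  replace (f w * g w - f z * g z - (lf * g z + f z * lg) * (w - z)) with
    ((f w - f z - lf * (w - z)) * g w + f z * (g w - g z - lg * (w - z)) + lf * (w - z) * (g w - g z)) by ring.
  eapply Rle_trans; [apply Cmod_triangle|].
  eapply Rle_trans; [apply Rplus_le_compat_r; apply Cmod_triangle|].
  rewrite !Cmod_mult.
  assert (HGt : (Cmod (g w) <= B)%R).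
  { replace (g w) with ((g w - g z) + g z) by ring. eapply Rle_trans; [apply Cmod_triangle|].
    unfold B. lra. }
  pose proof (Cmod_ge_0 (w - z)). pose proof (Cmod_ge_0 (g w)). pose proof (Cmod_ge_0 (f z)).
  pose proof (Cmod_ge_0 (g w - g z)).
  assert (Cmod (f z) <= A)%R by (unfold A; lra).
  assert (X1 : (Cmod (f w - f z - lf * (w - z)) * Cmod (g w) <= e * Cmod (w - z) * B)%R)
    by (apply Rmult_le_compat; auto; apply Cmod_ge_0).
  assert (X2 : (Cmod (f z) * Cmod (g w - g z - lg * (w - z)) <= A * (e * Cmod (w - z)))%R)
    by (apply Rmult_le_compat; auto; apply Cmod_ge_0).
  assert (X3 : (L * Cmod (w - z) * Cmod (g w - g z) <= L * Cmod (w - z) * e)%R)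
    by (apply Rmult_le_compat_l; [apply Rmult_le_pos; auto|lra]).
  unfold L in X3.
  apply Rle_trans with (e * (A + B + L) * Cmod (w - z))%R; [unfold L; nra|].
  apply Rmult_le_compat_r; auto.
Qed.
Open Scope R_scope.

Lemma pow2_ge (n : nat) : INR n + 1 <= 2 ^ n.
Proof.
  induction n; [simpl; lra|]. rewrite S_INR. simpl. pose proof (pos_INR n). lra.
Qed.

Lemma small_pow2 (K e : R) : 0 < e -> exists n : nat, K / 2 ^ n < e.
Proof.
  intros He. destruct (archimed (K / e)) as [H1 _].
  destruct (Rle_or_lt (IZR (up (K / e))) 0) as [Hn|Hn].
  - exists 0%nat. simpl. assert (K / e < 0) by lra.
    assert (K < 0). { apply (Rmult_lt_compat_r e) in H; auto. unfold Rdiv in H.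
      rewrite Rmult_assoc, Rinv_l, Rmult_0_l in H by lra. lra. }
    unfold Rdiv. rewrite Rinv_1. lra.
  - exists (Z.to_nat (up (K / e))).
    pose proof (pow2_ge (Z.to_nat (up (K / e)))).
    rewrite INR_IZR_INZ, Z2Nat.id in H by (apply le_IZR; lra).
    assert (H2 : K / e < 2 ^ Z.to_nat (up (K / e))) by lra.
    assert (Hp : 0 < 2 ^ Z.to_nat (up (K / e))) by (apply pow_lt; lra).
    apply (Rmult_lt_compat_r e) in H2; auto. unfold Rdiv in *.
    rewrite Rmult_assoc, Rinv_l, Rmult_1_r in H2 by lra.
    apply (Rmult_lt_reg_r (2 ^ Z.to_nat (up (K * / e)))); auto.
    rewrite Rmult_assoc, Rinv_l by lra. lra.
Qed.

Definition rect := (R * R * R * R)%type.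

Definition bstep (P : R -> R -> R -> R -> Prop) (r : rect) : rect :=
  let '(a, b, c, d) := r in
     let m := (a + b) / 2 in let m' := (c + d) / 2 in
     if excluded_middle_informative (P a m c m') then
       (if excluded_middle_informative (P m b c m') then
          (if excluded_middle_informative (P a m m' d) then (m, b, m', d) else (a, m, m', d))
        else (m, b, c, m'))
     else (a, m, c, m').

Lemma bstep_spec P a b c d :
  (P a ((a+b)/2) c ((c+d)/2) -> P ((a+b)/2) b c ((c+d)/2) ->
     P a ((a+b)/2) ((c+d)/2) d -> P ((a+b)/2) b ((c+d)/2) d -> P a b c d) ->
  ~ P a b c d -> a <= b -> c <= d ->
  let '(a', b', c', d') := bstep P (a, b, c, d) in
  ~ P a' b' c' d' /\ a <= a' /\ b' <= b /\ c <= c' /\ d' <= d /\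
  b' - a' = (b - a) / 2 /\ d' - c' = (d - c) / 2.
Proof.
  intros Hc HnP Hab Hcd. unfold bstep.
  destruct (excluded_middle_informative _) as [H1|H1];
  [destruct (excluded_middle_informative _) as [H2|H2];
   [destruct (excluded_middle_informative _) as [H3|H3]|]|];
  (split; [tauto|]); lra.
Qed.

Lemma bisect (P : R -> R -> R -> R -> Prop) x0 x1 y0 y1 :
  x0 <= x1 -> y0 <= y1 ->
  (forall a b c d, x0 <= a -> a <= b -> b <= x1 -> y0 <= c -> c <= d -> d <= y1 ->
     P a ((a+b)/2) c ((c+d)/2) -> P ((a+b)/2) b c ((c+d)/2) ->
     P a ((a+b)/2) ((c+d)/2) d -> P ((a+b)/2) b ((c+d)/2) d -> P a b c d) ->
  (forall p q, x0 <= p <= x1 -> y0 <= q <= y1 -> exists del, 0 < del /\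
     forall a b c d, x0 <= a -> a <= p -> p <= b -> b <= x1 ->
       y0 <= c -> c <= q -> q <= d -> d <= y1 -> b - a < del -> d - c < del -> P a b c d) ->
  P x0 x1 y0 y1.
Proof.
  intros Hx Hy Hcomb Hloc.
  apply NNPP. intros HnP.
  set (seqr := fun n => Nat.iter n (bstep P) (x0, x1, y0, y1)).
  set (A := fun n => fst (fst (fst (seqr n)))).
  set (B := fun n => snd (fst (fst (seqr n)))).
  set (Cc := fun n => snd (fst (seqr n))).
  set (Dd := fun n => snd (seqr n)).
  assert (Hinv : forall n, x0 <= A n /\ A n <= B n /\ B n <= x1 /\ y0 <= Cc n /\ Cc n <= Dd n /\ Dd n <= y1 /\
     B n - A n = (x1 - x0) / 2 ^ n /\ Dd n - Cc n = (y1 - y0) / 2 ^ n /\ ~ P (A n) (B n) (Cc n) (Dd n)).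
  { induction n.
    - unfold A, B, Cc, Dd, seqr. simpl. unfold Rdiv. rewrite Rinv_1, !Rmult_1_r. repeat split; auto; lra.
    - destruct IHn as (H1 & H2 & H3 & H4 & H5 & H6 & H7 & H8 & H9).
      assert (E : seqr (S n) = bstep P (A n, B n, Cc n, Dd n)).
      { unfold seqr at 1. simpl. fold (seqr n). unfold A, B, Cc, Dd.
        destruct (seqr n) as [[[a b] c] d]. reflexivity. }
      pose proof (bstep_spec P (A n) (B n) (Cc n) (Dd n) (Hcomb _ _ _ _ H1 H2 H3 H4 H5 H6) H9 H2 H5) as Hs.
      unfold A, B, Cc, Dd.
      rewrite E. destruct (bstep P (A n, B n, Cc n, Dd n)) as [[[a' b'] c'] d']. simpl.
      destruct Hs as (K1 & K2 & K3 & K4 & K5 & K6 & K7).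
      simpl pow. rewrite K6, K7, H7, H8.
      assert (0 < 2 ^ n) by (apply pow_lt; lra).
      repeat split; try lra; auto; field; lra. }
  assert (Hmon : forall n, A n <= A (S n) /\ B (S n) <= B n /\ Cc n <= Cc (S n) /\ Dd (S n) <= Dd n).
  { intros n. destruct (Hinv n) as (H1 & H2 & H3 & H4 & H5 & H6 & H7 & H8 & H9).
    assert (E : seqr (S n) = bstep P (A n, B n, Cc n, Dd n)).
    { unfold seqr at 1. simpl. fold (seqr n). unfold A, B, Cc, Dd.
      destruct (seqr n) as [[[a b] c] d]. reflexivity. }
    pose proof (bstep_spec P (A n) (B n) (Cc n) (Dd n) (Hcomb _ _ _ _ H1 H2 H3 H4 H5 H6) H9 H2 H5) as Hs.
    unfold A at 2, B at 1, Cc at 2, Dd at 1. rewrite E.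
    destruct (bstep P (A n, B n, Cc n, Dd n)) as [[[a' b'] c'] d']. simpl. lra. }
  assert (Hmon2 : forall n k : nat, A n <= A (n + k)%nat /\ B (n + k)%nat <= B n /\ Cc n <= Cc (n + k)%nat /\ Dd (n + k)%nat <= Dd n).
  { intros n k. induction k.
    - rewrite Nat.add_0_r. lra.
    - rewrite Nat.add_succ_r. destruct (Hmon (n + k)%nat). lra. }
  assert (HAB : forall n m, A n <= B m /\ Cc n <= Dd m).
  { intros n m. destruct (Nat.le_ge_cases n m) as [Hnm|Hnm].
    - destruct (Nat.le_exists_sub n m Hnm) as [k [Hk _]]. rewrite Nat.add_comm in Hk. subst m.
      destruct (Hmon2 n k). destruct (Hinv (n + k)%nat) as (_ & H2 & _ & _ & H5 & _). lra.
    - destruct (Nat.le_exists_sub m n Hnm) as [k [Hk _]]. rewrite Nat.add_comm in Hk. subst n.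
      destruct (Hmon2 m k). destruct (Hinv (m + k)%nat) as (_ & H2 & _ & _ & H5 & _). lra. }
  destruct (completeness (fun x => exists n, x = A n)) as [p [Hp1 Hp2]].
  { exists (B 0%nat). intros x [n ->]. apply HAB. }
  { exists (A 0%nat). exists 0%nat. reflexivity. }
  destruct (completeness (fun x => exists n, x = Cc n)) as [q [Hq1 Hq2]].
  { exists (Dd 0%nat). intros x [n ->]. apply HAB. }
  { exists (Cc 0%nat). exists 0%nat. reflexivity. }
  assert (HpA : forall n, A n <= p /\ p <= B n).
  { intros n. split. - apply Hp1. exists n; auto. - apply Hp2. intros x [k ->]. apply HAB. }
  assert (HqC : forall n, Cc n <= q /\ q <= Dd n).
  { intros n. split. - apply Hq1. exists n; auto. - apply Hq2. intros x [k ->]. apply HAB. }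
  assert (Hpr : x0 <= p <= x1) by (destruct (HpA 0%nat); destruct (Hinv 0%nat) as (H1&H2&H3&_); lra).
  assert (Hqr : y0 <= q <= y1) by (destruct (HqC 0%nat); destruct (Hinv 0%nat) as (_&_&_&H4&H5&H6&_); lra).
  destruct (Hloc p q Hpr Hqr) as [del [Hdel Hd]].
  destruct (small_pow2 ((x1 - x0) + (y1 - y0)) del Hdel) as [n Hn].
  destruct (Hinv n) as (H1 & H2 & H3 & H4 & H5 & H6 & H7 & H8 & H9).
  apply H9. destruct (HpA n), (HqC n).
  assert (0 < 2 ^ n) by (apply pow_lt; lra).
  assert ((x1 - x0) / 2 ^ n <= ((x1 - x0) + (y1 - y0)) / 2 ^ n).
  { unfold Rdiv. apply Rmult_le_compat_r; [left; apply Rinv_0_lt_compat; auto|lra]. }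
  assert ((y1 - y0) / 2 ^ n <= ((x1 - x0) + (y1 - y0)) / 2 ^ n).
  { unfold Rdiv. apply Rmult_le_compat_r; [left; apply Rinv_0_lt_compat; auto|lra]. }
  apply Hd; lra.
Qed.


Open Scope C_scope.

Lemma CR_plus (x y : C) : @plus C_R_CompleteNormedModule x y = x + y.
Proof. destruct x, y. reflexivity. Qed.
Lemma CR_minus (x y : C) : @minus C_R_CompleteNormedModule x y = x - y.
Proof. destruct x, y. reflexivity. Qed.
Lemma CR_norm (x : C) : @norm R_AbsRing C_R_CompleteNormedModule x = Cmod x.
Proof. destruct x as [a b]. unfold norm; simpl. unfold prod_norm, Cmod; simpl. unfold norm; simpl. unfold abs; simpl.
  rewrite !Rmult_1_r, <- !Rabs_mult, !Rabs_pos_eq by nra. reflexivity. Qed.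
Lemma CR_zero : @zero C_R_CompleteNormedModule = RtoC 0.
Proof. reflexivity. Qed.
Lemma CR_scal (r : R) (x : C) : @scal R_AbsRing C_R_CompleteNormedModule r x = RtoC r * x.
Proof. destruct x. unfold scal; simpl. unfold prod_scal, Cmult, RtoC; simpl. unfold scal; simpl; unfold mult; simpl. f_equal; ring. Qed.

Definition Gp (h0 l z0 z : C) : C := h0 * z + (l * / 2) * ((z - z0) * (z - z0)).

Lemma dC_const (c : C) x : @is_derive R_AbsRing C_R_NormedModule (fun _ => c) x (RtoC 0).
Proof. apply (@is_derive_const R_AbsRing C_R_NormedModule). Qed.

Lemma dC_plus (u v : R -> C) x du dv :
  @is_derive R_AbsRing C_R_NormedModule u x du -> @is_derive R_AbsRing C_R_NormedModule v x dv ->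
  @is_derive R_AbsRing C_R_NormedModule (fun t => u t + v t) x (du + dv).
Proof.
  intros. pose proof (@is_derive_plus R_AbsRing C_R_NormedModule u v x du dv H H0) as K.
  eapply is_derive_ext; [|exact K]. intros t; simpl. destruct (u t), (v t); reflexivity.
Qed.

Lemma dC_minus (u v : R -> C) x du dv :
  @is_derive R_AbsRing C_R_NormedModule u x du -> @is_derive R_AbsRing C_R_NormedModule v x dv ->
  @is_derive R_AbsRing C_R_NormedModule (fun t => u t - v t) x (du - dv).
Proof.
  intros. pose proof (@is_derive_minus R_AbsRing C_R_NormedModule u v x du dv H H0) as K.
  replace (du - dv) with (@minus C_R_NormedModule du dv) by (destruct du, dv; reflexivity).
  eapply is_derive_ext; [|exact K]. intros t; simpl. destruct (u t), (v t); reflexivity.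
Qed.

Lemma dC_Gp (u : R -> C) x du h0 l z0 :
  @is_derive R_AbsRing C_R_NormedModule u x du ->
  @is_derive R_AbsRing C_R_NormedModule (fun t => Gp h0 l z0 (u t)) x ((h0 + l * (u x - z0)) * du).
Proof.
  intros Hu. unfold Gp.
  assert (Hm : @is_derive R_AbsRing C_R_NormedModule (fun t => u t - z0) x (du - 0))
    by (apply dC_minus; auto; apply dC_const).
  pose proof (dC_plus _ _ x _ _ (dC_mult (fun _ => h0) u x _ _ (dC_const h0 x) Hu)
     (dC_mult (fun _ => l * / 2) (fun t => (u t - z0) * (u t - z0)) x _ _ (dC_const _ x)
        (dC_mult _ _ x _ _ Hm Hm))) as K.
  replace ((h0 + l * (u x - z0)) * du) with
    (0 * u x + h0 * du + (0 * ((u x - z0) * (u x - z0)) + l * / 2 * ((du - 0) * (u x - z0) + (u x - z0) * (du - 0)))).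
  - exact K.
  - field.
Qed.

Lemma CcontR_ex_RInt (F : R -> C) a b : (forall t, Rmin a b <= t <= Rmax a b -> CcontR F t) ->
  @ex_RInt C_R_CompleteNormedModule F a b.
Proof. intros H. apply ex_RInt_continuous. intros z Hz. apply CcontR_continuous. auto. Qed.

Lemma edge_ex (u du : R -> C) (h : C -> C) a b :
  (forall t, @is_derive R_AbsRing C_R_NormedModule u t (du t)) -> (forall t, CcontR du t) ->
  (forall t, Rmin a b <= t <= Rmax a b -> exists l, Cdiff h (u t) l) ->
  @ex_RInt C_R_CompleteNormedModule (fun t => h (u t) * du t) a b.
Proof.
  intros Hd Hc Hh. apply CcontR_ex_RInt. intros t Ht.
  destruct (Hh t Ht) as [l Hl].
  apply CcontR_mult; auto. apply CcontR_comp. 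
  - eapply derive_CcontR; eauto.
  - eapply Cdiff_Ccont; eauto.
Qed.

Lemma edge_est (u du : R -> C) (h : C -> C) z0 l a b e Mb :
  (a <= b)%R ->
  (forall t, @is_derive R_AbsRing C_R_NormedModule u t (du t)) -> (forall t, CcontR du t) ->
  (forall t, (a <= t <= b)%R -> exists l, Cdiff h (u t) l) ->
  (forall t, (a <= t <= b)%R -> (Cmod (du t) <= Mb)%R) ->
  (forall t, (a <= t <= b)%R -> (Cmod (h (u t) - (h z0 + l * (u t - z0))) <= e)%R) ->
  (Cmod (@RInt C_R_CompleteNormedModule (fun t => (h (u t) * du t)%C) a b
      - (Gp (h z0) l z0 (u b) - Gp (h z0) l z0 (u a))) <= (b - a) * (e * Mb))%R.
Proof.
  intros Hab Hd Hc Hh Hb He.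
  assert (HI := RInt_correct _ _ _ (edge_ex u du h a b Hd Hc ltac:(intros t Ht; apply Hh; rewrite Rmin_left, Rmax_right in Ht; auto))).
  assert (HF : @is_RInt C_R_CompleteNormedModule (fun t => (h z0 + l * (u t - z0)) * du t) a b
             (@minus C_R_CompleteNormedModule (Gp (h z0) l z0 (u b)) (Gp (h z0) l z0 (u a)))).
  { apply (@is_RInt_derive C_R_CompleteNormedModule (fun t => Gp (h z0) l z0 (u t))).
    - intros t _. apply dC_Gp. auto.
    - intros t _. apply CcontR_continuous. apply CcontR_mult; auto.
      apply CcontR_plus; [apply CcontR_const|]. apply CcontR_mult; [apply CcontR_const|].
      apply CcontR_minus; [|apply CcontR_const]. eapply derive_CcontR; eauto. }
  pose proof (@is_RInt_minus C_R_CompleteNormedModule _ _ a b _ _ HI HF) as HM.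
  rewrite !CR_minus in HM.
  assert (Hbound : forall t, (a <= t <= b)%R ->
    Rle (@norm R_AbsRing C_R_CompleteNormedModule (@minus C_R_CompleteNormedModule ((h (u t) * du t)%C) (((h z0 + l * (u t - z0)) * du t)%C))) (e * Mb)%R).
  2:{ pose proof (@norm_RInt_le_const C_R_CompleteNormedModule _ a b _ (e * Mb)%R Hab Hbound HM) as HN.
      rewrite CR_norm in HN. exact HN. }
  intros t Ht. rewrite CR_norm, CR_minus.
  replace (h (u t) * du t - (h z0 + l * (u t - z0)) * du t) with ((h (u t) - (h z0 + l * (u t - z0))) * du t) by ring.
  rewrite Cmod_mult. apply Rmult_le_compat; auto; apply Cmod_ge_0.
Qed.

Open Scope C_scope.

Definition EX (phi phx : R -> R -> C) (h : C -> C) (y a b : R) : C :=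
  @RInt C_R_CompleteNormedModule (fun x => (h (phi x y) * phx x y)%C) a b.
Definition EY (phi phy : R -> R -> C) (h : C -> C) (x c d : R) : C :=
  @RInt C_R_CompleteNormedModule (fun y => (h (phi x y) * phy x y)%C) c d.
Definition Bd phi phx phy h a b c d : C :=
  EX phi phx h c a b + EY phi phy h b c d - EX phi phx h d a b - EY phi phy h a c d.

Definition GH (phi phx phy : R -> R -> C) (h : C -> C) (x0 x1 y0 y1 M : R) : Prop :=
  (0 < M)%R /\
  (forall x y, @is_derive R_AbsRing C_R_NormedModule (fun t => phi t y) x (phx x y)) /\
  (forall x y, @is_derive R_AbsRing C_R_NormedModule (fun t => phi x t) y (phy x y)) /\
  (forall x y, CcontR (fun t => phx t y) x) /\
  (forall x y, CcontR (fun t => phy x t) y) /\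
  (forall x y, (x0 <= x <= x1)%R -> (y0 <= y <= y1)%R -> Rle (Cmod (phx x y)) M /\ Rle (Cmod (phy x y)) M) /\
  (forall x y x' y', (x0 <= x <= x1)%R -> (y0 <= y <= y1)%R -> (x0 <= x' <= x1)%R -> (y0 <= y' <= y1)%R ->
       Rle (Cmod (phi x' y' - phi x y)) (M * (Rabs (x' - x) + Rabs (y' - y)))%R) /\
  (forall x y, (x0 <= x <= x1)%R -> (y0 <= y <= y1)%R -> exists l, Cdiff h (phi x y) l).

Lemma EX_chasles phi phx phy h x0 x1 y0 y1 M y a m b :
  GH phi phx phy h x0 x1 y0 y1 M -> (y0 <= y <= y1)%R -> (x0 <= a)%R -> (a <= m)%R -> (m <= b)%R -> (b <= x1)%R ->
  EX phi phx h y a b = EX phi phx h y a m + EX phi phx h y m b.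
Proof.
  intros (HM & Hdx & Hdy & Hcx & Hcy & Hb & HL & Hh) Hy Ha Ham Hmb Hb1.
  unfold EX. rewrite <- CR_plus. symmetry. apply (@RInt_Chasles C_R_CompleteNormedModule).
  - apply (edge_ex (fun t => phi t y) (fun t => phx t y)); auto.
    intros t Ht. apply Hh; auto. rewrite Rmin_left, Rmax_right in Ht by lra. lra.
  - apply (edge_ex (fun t => phi t y) (fun t => phx t y)); auto.
    intros t Ht. apply Hh; auto. rewrite Rmin_left, Rmax_right in Ht by lra. lra.
Qed.

Lemma EY_chasles phi phx phy h x0 x1 y0 y1 M x c m d :
  GH phi phx phy h x0 x1 y0 y1 M -> (x0 <= x <= x1)%R -> (y0 <= c)%R -> (c <= m)%R -> (m <= d)%R -> (d <= y1)%R ->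
  EY phi phy h x c d = EY phi phy h x c m + EY phi phy h x m d.
Proof.
  intros (HM & Hdx & Hdy & Hcx & Hcy & Hb & HL & Hh) Hx Ha Ham Hmb Hb1.
  unfold EY. rewrite <- CR_plus. symmetry. apply (@RInt_Chasles C_R_CompleteNormedModule).
  - apply (edge_ex (fun t => phi x t) (fun t => phy x t)); auto.
    intros t Ht. apply Hh; auto. rewrite Rmin_left, Rmax_right in Ht by lra. lra.
  - apply (edge_ex (fun t => phi x t) (fun t => phy x t)); auto.
    intros t Ht. apply Hh; auto. rewrite Rmin_left, Rmax_right in Ht by lra. lra.
Qed.

Lemma Bd_quarter phi phx phy h x0 x1 y0 y1 M a b c d :
  GH phi phx phy h x0 x1 y0 y1 M -> (x0 <= a)%R -> (a <= b)%R -> (b <= x1)%R -> (y0 <= c)%R -> (c <= d)%R -> (d <= y1)%R ->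
  Bd phi phx phy h a b c d =
    Bd phi phx phy h a ((a+b)/2) c ((c+d)/2) + Bd phi phx phy h ((a+b)/2) b c ((c+d)/2) +
    Bd phi phx phy h a ((a+b)/2) ((c+d)/2) d + Bd phi phx phy h ((a+b)/2) b ((c+d)/2) d.
Proof.
  intros HG Ha Hab Hb Hc Hcd Hd. unfold Bd.
  rewrite (EX_chasles phi phx phy h x0 x1 y0 y1 M c a ((a+b)/2) b) by (auto; lra).
  rewrite (EX_chasles phi phx phy h x0 x1 y0 y1 M d a ((a+b)/2) b) by (auto; lra).
  rewrite (EY_chasles phi phx phy h x0 x1 y0 y1 M a c ((c+d)/2) d) by (auto; lra).
  rewrite (EY_chasles phi phx phy h x0 x1 y0 y1 M b c ((c+d)/2) d) by (auto; lra).
  ring.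
Qed.

Lemma Bd_local phi phx phy h x0 x1 y0 y1 M eta p q :
  GH phi phx phy h x0 x1 y0 y1 M -> (0 < eta)%R -> (x0 <= p <= x1)%R -> (y0 <= q <= y1)%R ->
  exists del, (0 < del)%R /\ forall a b c d, (x0 <= a)%R -> (a <= p)%R -> (p <= b)%R -> (b <= x1)%R ->
    (y0 <= c)%R -> (c <= q)%R -> (q <= d)%R -> (d <= y1)%R -> (b - a < del)%R -> (d - c < del)%R ->
    Rle (Cmod (Bd phi phx phy h a b c d)) (2 * eta * M ^ 2 * ((b - a) + (d - c)) ^ 2)%R.
Proof.
  intros HG Heta Hp Hq. pose proof HG as (HM & Hdx & Hdy & Hcx & Hcy & Hb & HL & Hh).
  destruct (Hh p q Hp Hq) as [l Hl].
  destruct (Hl eta Heta) as [rho [Hrho Hr]].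
  exists (rho / (2 * M))%R. split; [apply Rdiv_lt_0_compat; lra|].
  intros a b c d Ha Hap Hpb Hb1 Hc Hcq Hqd Hd1 Hba Hdc.
  set (z0 := phi p q). set (s := ((b - a) + (d - c))%R).
  assert (Hs : (M * s < rho)%R).
  { assert (s < 2 * (rho / (2 * M)))%R by (unfold s; lra).
    replace (2 * (rho / (2 * M)))%R with (rho / M)%R in H by (field; lra).
    apply (Rmult_lt_compat_l M) in H; auto. replace (M * (rho / M))%R with rho in H by (field; lra). lra. }
  assert (Hpt : forall x y, (a <= x <= b)%R -> (c <= y <= d)%R ->
     Rle (Cmod (h (phi x y) - (h z0 + l * (phi x y - z0)))) (eta * (M * s))%R).
  { intros x y Hx Hy.
    assert (Hd : Rle (Cmod (phi x y - z0)) (M * s)%R).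
    { unfold z0. eapply Rle_trans; [apply HL; lra|].
      apply Rmult_le_compat_l; [lra|]. unfold s.
      assert (Rabs (x - p) <= b - a)%R by (apply Rabs_le; lra).
      assert (Rabs (y - q) <= d - c)%R by (apply Rabs_le; lra). lra. }
    replace (h (phi x y) - (h z0 + l * (phi x y - z0))) with (h (phi x y) - h z0 - l * (phi x y - z0)) by ring.
    eapply Rle_trans; [apply Hr|]. { change (phi p q) with z0. lra. } apply Rmult_le_compat_l; [lra|]; change (phi p q) with z0; lra. }
  assert (E1 := edge_est (fun t => phi t c) (fun t => phx t c) h z0 l a b (eta * (M * s)) M ltac:(lra)
     (fun t => Hdx t c) (fun t => Hcx t c) ltac:(intros t Ht; apply Hh; lra)
     ltac:(intros t Ht; apply Hb; lra) ltac:(intros t Ht; apply Hpt; lra)).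
  assert (E3 := edge_est (fun t => phi t d) (fun t => phx t d) h z0 l a b (eta * (M * s)) M ltac:(lra)
     (fun t => Hdx t d) (fun t => Hcx t d) ltac:(intros t Ht; apply Hh; lra)
     ltac:(intros t Ht; apply Hb; lra) ltac:(intros t Ht; apply Hpt; lra)).
  assert (E2 := edge_est (fun t => phi b t) (fun t => phy b t) h z0 l c d (eta * (M * s)) M ltac:(lra)
     (fun t => Hdy b t) (fun t => Hcy b t) ltac:(intros t Ht; apply Hh; lra)
     ltac:(intros t Ht; apply Hb; lra) ltac:(intros t Ht; apply Hpt; lra)).
  assert (E4 := edge_est (fun t => phi a t) (fun t => phy a t) h z0 l c d (eta * (M * s)) M ltac:(lra)
     (fun t => Hdy a t) (fun t => Hcy a t) ltac:(intros t Ht; apply Hh; lra)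
     ltac:(intros t Ht; apply Hb; lra) ltac:(intros t Ht; apply Hpt; lra)).
  simpl in E1, E2, E3, E4. fold (EX phi phx h c a b) in E1. fold (EX phi phx h d a b) in E3.
  fold (EY phi phy h b c d) in E2. fold (EY phi phy h a c d) in E4.
  set (G := Gp (h z0) l z0) in *.
  unfold Bd.
  replace (EX phi phx h c a b + EY phi phy h b c d - EX phi phx h d a b - EY phi phy h a c d) with
    ((EX phi phx h c a b - (G (phi b c) - G (phi a c))) + (EY phi phy h b c d - (G (phi b d) - G (phi b c)))
     + - (EX phi phx h d a b - (G (phi b d) - G (phi a d))) + - (EY phi phy h a c d - (G (phi a d) - G (phi a c))))
    by ring.
  eapply Rle_trans; [apply Cmod_triangle|].
  eapply Rle_trans; [apply Rplus_le_compat_r; apply Cmod_triangle|].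
  eapply Rle_trans; [apply Rplus_le_compat_r; apply Rplus_le_compat_r; apply Cmod_triangle|].
  rewrite !Cmod_opp.
  replace (2 * eta * M ^ 2 * s ^ 2)%R with
    ((b - a) * (eta * (M * s) * M) + (d - c) * (eta * (M * s) * M) + (b - a) * (eta * (M * s) * M) + (d - c) * (eta * (M * s) * M))%R
    by (unfold s; ring).
  lra.
Qed.

Lemma goursat phi phx phy h x0 x1 y0 y1 M :
  GH phi phx phy h x0 x1 y0 y1 M -> (x0 <= x1)%R -> (y0 <= y1)%R ->
  Bd phi phx phy h x0 x1 y0 y1 = 0.
Proof.
  intros HG Hx Hy.
  assert (Hall : forall eta, (0 < eta)%R ->
     Rle (Cmod (Bd phi phx phy h x0 x1 y0 y1)) (2 * eta * M ^ 2 * ((x1 - x0) + (y1 - y0)) ^ 2)%R).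
  { intros eta Heta.
    apply (bisect (fun a b c d => Rle (Cmod (Bd phi phx phy h a b c d)) (2 * eta * M ^ 2 * ((b - a) + (d - c)) ^ 2)%R)); auto.
    - intros a b c d Ha Hab Hb Hc Hcd Hd H1 H2 H3 H4.
      rewrite (Bd_quarter phi phx phy h x0 x1 y0 y1 M a b c d) by auto.
      eapply Rle_trans; [apply Cmod_triangle|].
      eapply Rle_trans; [apply Rplus_le_compat_r; apply Cmod_triangle|].
      eapply Rle_trans; [apply Rplus_le_compat_r; apply Rplus_le_compat_r; apply Cmod_triangle|].
      replace (2 * eta * M ^ 2 * (b - a + (d - c)) ^ 2)%R with
        (2 * eta * M ^ 2 * ((a + b) / 2 - a + ((c + d) / 2 - c)) ^ 2 +
         2 * eta * M ^ 2 * (b - (a + b) / 2 + ((c + d) / 2 - c)) ^ 2 +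
         2 * eta * M ^ 2 * ((a + b) / 2 - a + (d - (c + d) / 2)) ^ 2 +
         2 * eta * M ^ 2 * (b - (a + b) / 2 + (d - (c + d) / 2)) ^ 2)%R by field.
      lra.
    - intros p q Hp Hq. apply (Bd_local phi phx phy h x0 x1 y0 y1 M eta p q HG Heta Hp Hq). }
  apply Cmod_eq_0. apply Rle_antisym; [|apply Cmod_ge_0].
  set (K := (2 * M ^ 2 * ((x1 - x0) + (y1 - y0)) ^ 2 + 1)%R).
  assert (HK : (0 < K)%R) by (unfold K; assert (0 <= 2 * M ^ 2 * ((x1 - x0) + (y1 - y0)) ^ 2)%R by
      (apply Rmult_le_pos; [apply Rmult_le_pos; [lra|apply pow2_ge_0]|apply pow2_ge_0]); lra).
  apply Rnot_lt_le. intros Hpos.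
  set (eta := (Cmod (Bd phi phx phy h x0 x1 y0 y1) / (2 * K))%R).
  assert (Heta : (0 < eta)%R) by (apply Rdiv_lt_0_compat; lra).
  specialize (Hall eta Heta).
  assert (2 * eta * M ^ 2 * (x1 - x0 + (y1 - y0)) ^ 2 <= eta * K)%R.
  { unfold K. assert (0 <= 2 * M ^ 2 * ((x1 - x0) + (y1 - y0)) ^ 2)%R by
      (apply Rmult_le_pos; [apply Rmult_le_pos; [lra|apply pow2_ge_0]|apply pow2_ge_0]). nra. }
  assert (eta * K = Cmod (Bd phi phx phy h x0 x1 y0 y1) / 2)%R by (unfold eta; field; lra).
  lra.
Qed.

Open Scope C_scope.

Lemma cos_lip (x y : R) : Rle (Rabs (cos x - cos y)) (Rabs (x - y)).
Proof.
  destruct (MVT_abs cos (fun t => - sin t)%R y x) as [c [Hc _]].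
  { intros c _. apply derivable_pt_lim_cos. }
  rewrite Hc. rewrite <- (Rmult_1_l (Rabs (x - y))) at 2.
  apply Rmult_le_compat_r; [apply Rabs_pos|]. rewrite Rabs_Ropp. apply Rabs_le. apply SIN_bound.
Qed.

Lemma sin_lip (x y : R) : Rle (Rabs (sin x - sin y)) (Rabs (x - y)).
Proof.
  destruct (MVT_abs sin cos y x) as [c [Hc _]].
  { intros c _. apply derivable_pt_lim_sin. }
  rewrite Hc. rewrite <- (Rmult_1_l (Rabs (x - y))) at 2.
  apply Rmult_le_compat_r; [apply Rabs_pos|]. apply Rabs_le. apply COS_bound.
Qed.


Definition rr (eps Rad l : R) : R := ((1 - l) * eps + l * Rad)%R.
Definition phiC (a : C) (eps Rad : R) (l t : R) : C :=
  (((1 - l) * fst a + rr eps Rad l * cos t)%R, ((1 - l) * snd a + rr eps Rad l * sin t)%R).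
Definition phiCx (a : C) (eps Rad : R) (l t : R) : C :=
  ((- fst a + (Rad - eps) * cos t)%R, (- snd a + (Rad - eps) * sin t)%R).
Definition phiCy (a : C) (eps Rad : R) (l t : R) : C :=
  ((- (rr eps Rad l * sin t))%R, (rr eps Rad l * cos t)%R).

Lemma phiC_dx a eps Rad l t :
  @is_derive R_AbsRing C_R_NormedModule (fun s => phiC a eps Rad s t) l (phiCx a eps Rad l t).
Proof.
  unfold phiC, phiCx, rr. apply dC_pair; auto_derive; auto; ring.
Qed.

Lemma phiC_dy a eps Rad l t :
  @is_derive R_AbsRing C_R_NormedModule (fun s => phiC a eps Rad l s) t (phiCy a eps Rad l t).
Proof.
  unfold phiC, phiCy, rr. apply dC_pair; auto_derive; auto; ring.
Qed.

Lemma phiCy_dy a eps Rad l t :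
  @is_derive R_AbsRing C_R_NormedModule (fun s => phiCy a eps Rad l s) t
    (((- (rr eps Rad l * cos t))%R, (- (rr eps Rad l * sin t))%R) : C).
Proof.
  unfold phiCy, rr. apply dC_pair; auto_derive; auto; ring.
Qed.

Definition Mb (a : C) (eps Rad : R) : R := (2 * (Rabs (fst a) + Rabs (snd a) + Rabs Rad + eps + 1))%R.

Lemma rr_bounds eps Rad l : (0 < eps)%R -> (0 < Rad)%R -> (0 <= l <= 1)%R ->
  (0 <= rr eps Rad l <= eps + Rad)%R.
Proof. intros. unfold rr. nra. Qed.

Lemma Rabs_mult_cos_le (u t : R) : Rle (Rabs (u * cos t)) (Rabs u).
Proof. rewrite Rabs_mult. rewrite <- (Rmult_1_r (Rabs u)) at 2. apply Rmult_le_compat_l; [apply Rabs_pos|].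
  apply Rabs_le, COS_bound. Qed.
Lemma Rabs_mult_sin_le (u t : R) : Rle (Rabs (u * sin t)) (Rabs u).
Proof. rewrite Rabs_mult. rewrite <- (Rmult_1_r (Rabs u)) at 2. apply Rmult_le_compat_l; [apply Rabs_pos|].
  apply Rabs_le, SIN_bound. Qed.

Lemma phiCx_bound a eps Rad l t : (0 < eps)%R -> (0 < Rad)%R -> Rle (Cmod (phiCx a eps Rad l t)) (Mb a eps Rad).
Proof.
  intros He HR. eapply Rle_trans; [apply Cmod_le_sum|]. unfold phiCx, Mb; simpl.
  pose proof (Rabs_triang (- fst a) ((Rad - eps) * cos t)).
  pose proof (Rabs_triang (- snd a) ((Rad - eps) * sin t)).
  pose proof (Rabs_mult_cos_le (Rad - eps) t). pose proof (Rabs_mult_sin_le (Rad - eps) t).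
  rewrite Rabs_Ropp in *. pose proof (Rabs_triang Rad (- eps)). rewrite Rabs_Ropp, (Rabs_pos_eq eps) in H3 by lra.
  pose proof (Rabs_pos (fst a)). pose proof (Rabs_pos (snd a)). pose proof (Rabs_pos Rad).
  unfold Rminus in *. lra.
Qed.

Lemma phiCy_bound a eps Rad l t : (0 < eps)%R -> (0 < Rad)%R -> (0 <= l <= 1)%R ->
  Rle (Cmod (phiCy a eps Rad l t)) (Mb a eps Rad).
Proof.
  intros He HR Hl. eapply Rle_trans; [apply Cmod_le_sum|]. unfold phiCy, Mb; simpl.
  rewrite Rabs_Ropp. pose proof (Rabs_mult_cos_le (rr eps Rad l) t). pose proof (Rabs_mult_sin_le (rr eps Rad l) t).
  pose proof (rr_bounds eps Rad l He HR Hl). rewrite (Rabs_pos_eq (rr eps Rad l)) in * by lra.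
  rewrite (Rabs_pos_eq Rad) by lra.
  pose proof (Rabs_pos (fst a)). pose proof (Rabs_pos (snd a)). lra.
Qed.

Lemma phiC_lip a eps Rad l t l' t' : (0 < eps)%R -> (0 < Rad)%R -> (0 <= l <= 1)%R ->
  Rle (Cmod (phiC a eps Rad l' t' - phiC a eps Rad l t)) (Mb a eps Rad * (Rabs (l' - l) + Rabs (t' - t)))%R.
Proof.
  intros He HR Hl. eapply Rle_trans; [apply Cmod_le_sum|]. unfold phiC, Mb; simpl.
  pose proof (rr_bounds eps Rad l He HR Hl) as Hr.
  assert (E1 : ((1 - l') * fst a + rr eps Rad l' * cos t' + - ((1 - l) * fst a + rr eps Rad l * cos t))%R =
     ((l' - l) * (- fst a) + ((l' - l) * (Rad - eps)) * cos t' + rr eps Rad l * (cos t' - cos t))%R) by (unfold rr; ring).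
  assert (E2 : ((1 - l') * snd a + rr eps Rad l' * sin t' + - ((1 - l) * snd a + rr eps Rad l * sin t))%R =
     ((l' - l) * (- snd a) + ((l' - l) * (Rad - eps)) * sin t' + rr eps Rad l * (sin t' - sin t))%R) by (unfold rr; ring).
  rewrite E1, E2.
  pose proof (Rabs_triang ((l' - l) * - fst a + (l' - l) * (Rad - eps) * cos t') (rr eps Rad l * (cos t' - cos t))).
  pose proof (Rabs_triang ((l' - l) * - fst a) ((l' - l) * (Rad - eps) * cos t')).
  pose proof (Rabs_triang ((l' - l) * - snd a + (l' - l) * (Rad - eps) * sin t') (rr eps Rad l * (sin t' - sin t))).
  pose proof (Rabs_triang ((l' - l) * - snd a) ((l' - l) * (Rad - eps) * sin t')).
  pose proof (Rabs_mult_cos_le ((l' - l) * (Rad - eps)) t'). pose proof (Rabs_mult_sin_le ((l' - l) * (Rad - eps)) t').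
  rewrite !Rabs_mult, !Rabs_Ropp in *.
  rewrite (Rabs_pos_eq (rr eps Rad l)) in * by lra.
  pose proof (cos_lip t' t). pose proof (sin_lip t' t).
  pose proof (Rabs_triang Rad (- eps)). rewrite Rabs_Ropp, (Rabs_pos_eq eps) in H7 by lra.
  pose proof (Rabs_pos (fst a)). pose proof (Rabs_pos (snd a)). pose proof (Rabs_pos Rad).
  pose proof (Rabs_pos (l' - l)). pose proof (Rabs_pos (t' - t)).
  unfold Rminus in *.
  assert (Rabs (l' + - l) * Rabs (Rad + - eps) <= Rabs (l' + - l) * (Rabs Rad + eps))%R by (apply Rmult_le_compat_l; lra).
  assert (rr eps Rad l * Rabs (cos t' + - cos t) <= (eps + Rad) * Rabs (t' + - t))%R by (apply Rmult_le_compat; try apply Rabs_pos; lra).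
  assert (rr eps Rad l * Rabs (sin t' + - sin t) <= (eps + Rad) * Rabs (t' + - t))%R by (apply Rmult_le_compat; try apply Rabs_pos; lra).
  rewrite (Rabs_pos_eq Rad) in * by lra.
  nra.
Qed.

Lemma phiC_ne a eps Rad l t : (0 < eps)%R -> (Cmod a < Rad)%R -> (0 <= l <= 1)%R ->
  phiC a eps Rad l t <> a.
Proof.
  intros He HR Hl E. unfold phiC in E. destruct a as [a1 a2]. simpl in E. injection E as E1 E2.
  assert (Hc : (Cmod (a1, a2) ^ 2 = a1 ^ 2 + a2 ^ 2)%R) by (unfold Cmod; simpl fst; simpl snd; rewrite pow2_sqrt; [ring|nra]).
  pose proof (Cmod_ge_0 (a1, a2)).
  assert (Hpos : (l * Cmod (a1, a2) < rr eps Rad l)%R).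
  { unfold rr. destruct (Req_dec l 0) as [->|Hl0]; [lra|]. 
    assert (0 < l)%R by lra. assert (0 < l * (Rad - Cmod (a1, a2)))%R by (apply Rmult_lt_0_compat; lra). nra. }
  assert (Ec : (rr eps Rad l * cos t = l * a1)%R) by lra.
  assert (Es : (rr eps Rad l * sin t = l * a2)%R) by lra.
  pose proof (sin2_cos2 t). unfold Rsqr in H0.
  assert ((rr eps Rad l) ^ 2 = l ^ 2 * Cmod (a1, a2) ^ 2)%R.
  { rewrite Hc. replace ((rr eps Rad l) ^ 2)%R with ((rr eps Rad l * cos t) ^ 2 + (rr eps Rad l * sin t) ^ 2)%R
      by (rewrite <- (Rmult_1_r ((rr eps Rad l)^2)), <- H0; ring).
    rewrite Ec, Es. ring. }
  assert (0 <= l * Cmod (a1, a2))%R by nra.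
  nra.
Qed.

Definition hq (f : C -> C) (a : C) (z : C) : C := f z * / (z - a).

Lemma hq_Cdiff f a z : entire f -> z <> a -> exists l, Cdiff (hq f a) z l.
Proof.
  intros Hf Hz. destruct (entire_Cdiff f Hf z) as [lf Hlf].
  eexists. unfold hq. apply (Cdiff_mult f (fun w => / (w - a))); [exact Hlf|]. apply Cdiff_inv; auto.
Qed.

Lemma GH_phiC f a eps Rad : entire f -> (0 < eps)%R -> (Cmod a < Rad)%R ->
  GH (phiC a eps Rad) (phiCx a eps Rad) (phiCy a eps Rad) (hq f a) 0 1 0 (2 * PI) (Mb a eps Rad).
Proof.
  intros Hf He HR. assert (HR0 : (0 < Rad)%R) by (pose proof (Cmod_ge_0 a); lra).
  refine (conj _ (conj _ (conj _ (conj _ (conj _ (conj _ (conj _ _))))))).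
  - unfold Mb. pose proof (Rabs_pos (fst a)). pose proof (Rabs_pos (snd a)). pose proof (Rabs_pos Rad). lra.
  - intros; apply phiC_dx.
  - intros; apply phiC_dy.
  - intros x y. unfold phiCx. apply CcontR_const.
  - intros x y. eapply derive_CcontR. apply phiCy_dy.
  - intros x y Hx Hy. split; [apply phiCx_bound; auto|apply phiCy_bound; auto; lra].
  - intros x y x' y' Hx Hy Hx' Hy'. apply phiC_lip; auto; lra.
  - intros x y Hx Hy. apply hq_Cdiff; auto. apply phiC_ne; auto; lra.
Qed.

Lemma circle_shift f a eps Rad : entire f -> (0 < eps)%R -> (Cmod a < Rad)%R ->
  @RInt C_R_CompleteNormedModule
     (fun t => (hq f a (((Rad * cos t)%R, (Rad * sin t)%R)) * (((- (Rad * sin t))%R, (Rad * cos t)%R) : C))%C) 0 (2 * PI)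
  = @RInt C_R_CompleteNormedModule (fun t => (Ci * f (phiC a eps Rad 0 t))%C) 0 (2 * PI).
Proof.
  intros Hf He HR.
  pose proof (goursat _ _ _ _ _ _ _ _ _ (GH_phiC f a eps Rad Hf He HR) ltac:(lra)
      ltac:(pose proof PI_RGT_0; lra)) as HB.
  unfold Bd in HB.
  assert (EXeq : EX (phiC a eps Rad) (phiCx a eps Rad) (hq f a) 0 0 1 = EX (phiC a eps Rad) (phiCx a eps Rad) (hq f a) (2 * PI) 0 1).
  { unfold EX. apply (@RInt_ext C_R_CompleteNormedModule). intros x _. unfold phiC, phiCx. rewrite cos_2PI, sin_2PI, cos_0, sin_0. reflexivity. }
  assert (E1 : EY (phiC a eps Rad) (phiCy a eps Rad) (hq f a) 1 0 (2 * PI) = EY (phiC a eps Rad) (phiCy a eps Rad) (hq f a) 0 0 (2 * PI)).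
  { rewrite EXeq in HB. 
    replace (EY (phiC a eps Rad) (phiCy a eps Rad) (hq f a) 1 0 (2 * PI)) with
      ((EX (phiC a eps Rad) (phiCx a eps Rad) (hq f a) (2 * PI) 0 1 + EY (phiC a eps Rad) (phiCy a eps Rad) (hq f a) 1 0 (2 * PI) -
      EX (phiC a eps Rad) (phiCx a eps Rad) (hq f a) (2 * PI) 0 1 - EY (phiC a eps Rad) (phiCy a eps Rad) (hq f a) 0 0 (2 * PI))
      + EY (phiC a eps Rad) (phiCy a eps Rad) (hq f a) 0 0 (2 * PI)) by ring.
    rewrite HB. ring. }
  unfold EY in E1.
  transitivity (@RInt C_R_CompleteNormedModule (fun y => (hq f a (phiC a eps Rad 1 y) * phiCy a eps Rad 1 y)%C) 0 (2 * PI)).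
  { apply (@RInt_ext C_R_CompleteNormedModule). intros t _. unfold phiC, phiCy, rr. f_equal; [f_equal|]; f_equal; ring. }
  rewrite E1. apply (@RInt_ext C_R_CompleteNormedModule). intros t _.
  assert (Hne : phiC a eps Rad 0 t - a <> 0).
  { intro E. apply (phiC_ne a eps Rad 0 t He HR ltac:(lra)). replace (phiC a eps Rad 0 t) with ((phiC a eps Rad 0 t - a) + a) by ring. rewrite E. ring. }
  assert (Ey : phiCy a eps Rad 0 t = Ci * (phiC a eps Rad 0 t - a)).
  { unfold phiCy, phiC, rr, Ci. destruct a as [a1 a2]. unfold Cmult, Cminus, Cplus, Copp; simpl. f_equal; ring. }
  rewrite Ey. unfold hq. assert (X : forall u v w : C, v <> 0 -> u * / v * (w * v) = w * u) by (intros; field; auto). apply X; auto.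
Qed.

Lemma phiC0_d a eps Rad t :
  @is_derive R_AbsRing C_R_NormedModule (fun s => phiC a eps Rad 0 s) t (phiCy a eps Rad 0 t).
Proof. apply phiC_dy. Qed.

Lemma phiC0_dist a eps Rad t : (0 < eps)%R -> Rle (Cmod (phiC a eps Rad 0 t - a)) (2 * eps)%R.
Proof.
  intros He. eapply Rle_trans; [apply Cmod_le_sum|]. destruct a as [a1 a2]. unfold phiC, rr. simpl.
  replace ((1 - 0) * a1 + ((1 - 0) * eps + 0 * Rad) * cos t + - a1)%R with (eps * cos t)%R by ring.
  replace ((1 - 0) * a2 + ((1 - 0) * eps + 0 * Rad) * sin t + - a2)%R with (eps * sin t)%R by ring.
  pose proof (Rabs_mult_cos_le eps t). pose proof (Rabs_mult_sin_le eps t).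
  rewrite (Rabs_pos_eq eps) in * by lra. lra.
Qed.

Lemma Csub0 (x y : C) : x - y = 0 -> x = y.
Proof. intros H. replace x with ((x - y) + y) by ring. rewrite H. ring. Qed.

Lemma entire_Ccont f z : entire f -> Ccont f z.
Proof. intros Hf. destruct (entire_Cdiff f Hf z) as [l Hl]. eapply Cdiff_Ccont; eauto. Qed.

Lemma CIF f a Rad : entire f -> (Cmod a < Rad)%R ->
  @RInt C_R_CompleteNormedModule
     (fun t => (hq f a (((Rad * cos t)%R, (Rad * sin t)%R)) * (((- (Rad * sin t))%R, (Rad * cos t)%R) : C))%C) 0 (2 * PI)
  = ((0, 2 * PI)%R : C) * f a.
Proof.
  intros Hf HR.
  assert (HPI : (0 < PI)%R) by apply PI_RGT_0.
  destruct (entire_Cdiff f Hf a) as [la Hla]. pose proof (Cdiff_Ccont f a la Hla) as Hca.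
  assert (Hall : forall eta, (0 < eta)%R -> Rle (Cmod (@RInt C_R_CompleteNormedModule
     (fun t => (hq f a (((Rad * cos t)%R, (Rad * sin t)%R)) * (((- (Rad * sin t))%R, (Rad * cos t)%R) : C))%C) 0 (2 * PI)
     - ((0, 2 * PI)%R : C) * f a)) (2 * PI * eta)%R).
  { intros eta Heta. destruct (Hca eta Heta) as [del [Hdel Hd]].
    set (eps := (del / 3)%R). assert (He : (0 < eps)%R) by (unfold eps; lra).
    rewrite (circle_shift f a eps Rad Hf He HR).
    assert (HJ := RInt_correct (V := C_R_CompleteNormedModule) (fun t => (Ci * f (phiC a eps Rad 0 t))%C) 0 (2 * PI)
      ltac:(apply CcontR_ex_RInt; intros t _; apply CcontR_mult; [apply CcontR_const|];
            apply CcontR_comp; [eapply derive_CcontR; apply phiC0_d|];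
            apply entire_Ccont; auto)).
    assert (HC := is_RInt_const (V := C_R_CompleteNormedModule) 0 (2 * PI) (Ci * f a)).
    pose proof (is_RInt_minus (V := C_R_CompleteNormedModule) _ _ _ _ _ _ HJ HC) as HM.
    rewrite CR_minus, CR_scal in HM.
    assert (Hbound : forall t, (0 <= t <= 2 * PI)%R ->
      Rle (@norm R_AbsRing C_R_CompleteNormedModule (@minus C_R_CompleteNormedModule ((Ci * f (phiC a eps Rad 0 t))%C) ((Ci * f a)%C))) eta).
    { intros t Ht. rewrite CR_norm, CR_minus.
      replace (Ci * f (phiC a eps Rad 0 t) - Ci * f a) with (Ci * (f (phiC a eps Rad 0 t) - f a)) by ring.
      rewrite Cmod_mult, Cmod_Ci, Rmult_1_l. left. apply Hd.
      pose proof (phiC0_dist a eps Rad t He) as Hdist. unfold eps in *. lra. }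
    pose proof (norm_RInt_le_const (V := C_R_CompleteNormedModule) _ 0 (2 * PI) _ eta ltac:(lra) Hbound HM) as HN.
    rewrite CR_norm in HN.
    replace (((0, 2 * PI)%R : C) * f a) with (RtoC (2 * PI - 0) * (Ci * f a)).
    - eapply Rle_trans; [exact HN|]. right. ring.
    - unfold RtoC, Ci. destruct (f a). unfold Cmult; simpl. f_equal; ring. }
  match type of Hall with forall eta, _ -> Rle (Cmod (?L - ?T)) _ => set (LL := L) in *; set (TT := T) in * end.
  assert (H0 : Cmod (LL - TT) = 0%R).
  { apply Rle_antisym; [|apply Cmod_ge_0]. apply Rnot_lt_le. intros Hpos.
    specialize (Hall (Cmod (LL - TT) / (4 * PI))%R ltac:(apply Rdiv_lt_0_compat; lra)).
    replace (2 * PI * (Cmod (LL - TT) / (4 * PI)))%R with (Cmod (LL - TT) / 2)%R in Hall by (field; lra). lra. }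
  apply Cmod_eq_0 in H0. apply Csub0. exact H0.
Qed.

Open Scope C_scope.

Definition sa (a : C) (h : nat) : C := match h with 1%nat => a | _ => 0 end.

Lemma Csum_two (n : nat) (g : nat -> C) : (2 <= n)%nat -> (forall h, (2 <= h)%nat -> g h = 0) ->
  Csum n g = g 0%nat + g 1%nat.
Proof.
  intros Hn Hg. induction n as [|n IH]; [lia|].
  destruct (Nat.eq_dec n 1) as [->|Hn1].
  - simpl. ring.
  - simpl. rewrite IH by lia. rewrite (Hg n) by lia. ring.
Qed.

Lemma Ps_sa (m : nat) (a z : C) : Ps (S (S m)) (sa a) z = z ^ (S m) * (z - a).
Proof.
  unfold Ps. rewrite Csum_two by (try lia; intros h Hh; destruct h as [|[|h]]; try lia; simpl; ring).
  simpl sext. replace (S (S m) - 0)%nat with (S (S m)) by lia. replace (S (S m) - 1)%nat with (S m) by lia.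
  simpl. ring.
Qed.

Lemma dPs_sa (m : nat) (a z : C) : dPs (S (S m)) (sa a) z =
  RtoC (INR (S (S m))) * z ^ (S m) - RtoC (INR (S m)) * a * z ^ m.
Proof.
  unfold dPs. rewrite Csum_two by (try lia; intros h Hh; destruct h as [|[|h]]; try lia; simpl; ring).
  simpl sext. replace (S (S m) - 0)%nat with (S (S m)) by lia. replace (S (S m) - 1)%nat with (S m) by lia.
  replace (S (S m) - 0 - 1)%nat with (S m) by lia. replace (S (S m) - 1 - 1)%nat with m by lia.
  replace (S m - 1)%nat with m by lia. simpl Cpow. ring.
Qed.

Definition circ (Rad t : R) : C := ((Rad * cos t)%R, (Rad * sin t)%R).
Definition dcirc (Rad t : R) : C := ((- (Rad * sin t))%R, (Rad * cos t)%R).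

Lemma circ_mod Rad t : (0 < Rad)%R -> Cmod (circ Rad t) = Rad.
Proof.
  intros H. unfold Cmod, circ; simpl.
  replace (Rad * cos t * (Rad * cos t * 1) + Rad * sin t * (Rad * sin t * 1))%R with (Rad * Rad)%R.
  - apply sqrt_square. lra.
  - pose proof (sin2_cos2 t). unfold Rsqr in H0. transitivity (Rad * Rad * (sin t * sin t + cos t * cos t))%R; [rewrite H0; ring|ring].
Qed.

Lemma circ_ne Rad t a : (Cmod a < Rad)%R -> circ Rad t <> a.
Proof.
  intros H E. assert (0 < Rad)%R by (pose proof (Cmod_ge_0 a); lra).
  pose proof (circ_mod Rad t H0). rewrite E in H1. lra.
Qed.

Lemma circ_d Rad t : @is_derive R_AbsRing C_R_NormedModule (circ Rad) t (dcirc Rad t).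
Proof. unfold circ, dcirc. apply dC_pair; auto_derive; auto; ring. Qed.

Lemma dcirc_d Rad t : @is_derive R_AbsRing C_R_NormedModule (dcirc Rad) t
   (((- (Rad * cos t))%R, (- (Rad * sin t))%R) : C).
Proof. unfold dcirc. apply dC_pair; auto_derive; auto; ring. Qed.

Lemma circ_is_RInt f a Rad : entire f -> (Cmod a < Rad)%R ->
  @is_RInt C_R_CompleteNormedModule (fun t => (hq f a (circ Rad t) * dcirc Rad t)%C) 0 (2 * PI)
     (((0, 2 * PI)%R : C) * f a).
Proof.
  intros Hf HR. 
  assert (HE : @ex_RInt C_R_CompleteNormedModule (fun t => (hq f a (circ Rad t) * dcirc Rad t)%C) 0 (2 * PI)).
  { apply (edge_ex (circ Rad) (dcirc Rad)).
    - intros t. apply circ_d.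
    - intros t. eapply derive_CcontR. apply dcirc_d.
    - intros t _. apply hq_Cdiff; auto. apply circ_ne; auto. }
  pose proof (RInt_correct _ _ _ HE) as HI.
  pose proof (CIF f a Rad Hf HR) as Hc. 
  unfold circ, dcirc in HI. rewrite Hc in HI. exact HI.
Qed.

Lemma adm_sa m a Rad : admissible (S (S m)) (sa a) Rad -> (0 < Rad)%R /\ (Cmod a < Rad)%R.
Proof.
  intros [H1 H2]. split; auto. apply H2. rewrite Ps_sa. ring.
Qed.

Lemma PI2_ne : ((0, 2 * PI)%R : C) <> 0.
Proof.
  intros E. injection E as E. pose proof PI_RGT_0. lra.
Qed.

Lemma Phi_sa f m a Rad : entire f -> admissible (S (S m)) (sa a) Rad ->
  Phi f (S (S m)) (sa a) Rad (S m) = f a.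
Proof.
  intros Hf Hadm. destruct (adm_sa m a Rad Hadm) as [HR0 HR].
  unfold Phi, circle_integral.
  rewrite (@RInt_ext C_R_CompleteNormedModule _ (fun t => (hq f a (circ Rad t) * dcirc Rad t)%C)).
  - rewrite (is_RInt_unique _ _ _ _ (circ_is_RInt f a Rad Hf HR)).
    assert (X : forall u v : C, u <> 0 -> / u * (u * v) = v) by (intros; field; auto).
    apply X. apply PI2_ne.
  - intros t _. fold (circ Rad t). fold (dcirc Rad t). rewrite Ps_sa. unfold hq.
    assert (Hz : circ Rad t <> 0) by (apply circ_ne; rewrite Cmod_0; auto).
    assert (Ha : circ Rad t - a <> 0) by (intro E; apply (circ_ne Rad t a HR); apply Csub0; auto).
    assert (Hp : circ Rad t ^ S m <> 0) by (apply Cpow_nz; auto).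
    assert (X : forall u v w p d : C, p <> 0 -> v <> 0 -> u * p / (p * v) * d = u * / v * d) by (intros; field; auto).
    apply X; auto.
Qed.

Lemma is_RInt_Cscal (F : R -> C) a b I (c : R) :
  @is_RInt C_R_CompleteNormedModule F a b I ->
  @is_RInt C_R_CompleteNormedModule (fun t => (RtoC c * F t)%C) a b (RtoC c * I).
Proof.
  intros H. pose proof (is_RInt_scal (V := C_R_CompleteNormedModule) F a b c I H) as K.
  rewrite CR_scal in K. eapply is_RInt_ext; [|exact K]. intros x _. apply CR_scal.
Qed.

Lemma Psi_sa f m a Rad : entire f -> admissible (S (S m)) (sa a) Rad ->
  Psi f (S (S m)) (sa a) Rad 0 = RtoC (INR (S m)) * f 0 + f a.
Proof.
  intros Hf Hadm. destruct (adm_sa m a Rad Hadm) as [HR0 HR].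
  assert (H0R : (Cmod 0 < Rad)%R) by (rewrite Cmod_0; auto).
  pose proof (is_RInt_plus (V := C_R_CompleteNormedModule) _ _ 0 (2 * PI) _ _
     (is_RInt_Cscal _ _ _ _ (INR (S m)) (circ_is_RInt f 0 Rad Hf H0R)) (circ_is_RInt f a Rad Hf HR)) as K.
  rewrite CR_plus in K.
  assert (K' : @is_RInt C_R_CompleteNormedModule
     (fun t => (RtoC (INR (S m)) * (hq f 0 (circ Rad t) * dcirc Rad t) + hq f a (circ Rad t) * dcirc Rad t)%C) 0 (2 * PI)
     (RtoC (INR (S m)) * (((0, 2 * PI)%R : C) * f 0) + ((0, 2 * PI)%R : C) * f a)).
  { eapply is_RInt_ext; [|exact K]. intros; apply CR_plus. }
  unfold Psi, circle_integral.
  rewrite (@RInt_ext C_R_CompleteNormedModule _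
     (fun t => (RtoC (INR (S m)) * (hq f 0 (circ Rad t) * dcirc Rad t) + hq f a (circ Rad t) * dcirc Rad t)%C)).
  - rewrite (is_RInt_unique _ _ _ _ K').
    assert (X : forall u v w r : C, u <> 0 -> / u * (r * (u * v) + u * w) = r * v + w) by (intros; field; auto).
    apply X. apply PI2_ne.
  - intros t _. fold (circ Rad t). fold (dcirc Rad t). rewrite Ps_sa, dPs_sa. unfold hq.
    assert (Hz : circ Rad t <> 0) by (apply circ_ne; rewrite Cmod_0; auto).
    assert (Ha : circ Rad t - a <> 0) by (intro E; apply (circ_ne Rad t a HR); apply Csub0; auto).
    assert (Hp : circ Rad t ^ m <> 0) by (apply Cpow_nz; auto).
    rewrite S_INR with (n := S m). rewrite RtoC_plus.
    set (z := circ Rad t). set (d := dcirc Rad t). set (r := RtoC (INR (S m))).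
    assert (X : forall u p : C, u <> 0 -> p <> 0 -> u - a <> 0 ->
       f u * 1 * ((r + 1) * (u * p) - r * a * p) / (u * p * (u - a)) * d =
       r * (f u * / (u - 0) * d) + f u * / (u - a) * d).
    { intros u p H1 H2 H3. assert (u - 0 <> 0) by (replace (u - 0) with u by ring; auto). field. repeat split; auto. }
    simpl Cpow. apply X; auto.
Qed.

Theorem mainTheorem2 (k : nat) (hk : (2 <= k)%nat) (f : C -> C)
  (hf : entire f) (hnz : exists z : C, f z <> 0) :
  (exists s : nat -> C, forall Rad : R, admissible k s Rad ->
      exists j : nat, (j < k)%nat /\ Phi f k s Rad j <> 0) /\
  (exists s : nat -> C, forall Rad : R, admissible k s Rad ->
      exists j : nat, (j < k)%nat /\ Psi f k s Rad j <> 0).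
Proof.
  destruct k as [|[|m]]; try lia.
  assert (Ha : exists a, f a <> 0 /\ (a = 0 \/ f 0 = 0)).
  { destruct (Ceq_dec (f 0) 0) as [H0|H0].
    - destruct hnz as [z Hz]. exists z. auto.
    - exists 0. auto. }
  destruct Ha as [a [Hfa Hor]].
  split; exists (sa a); intros Rad Hadm.
  - exists (S m). split; [lia|]. rewrite Phi_sa; auto.
  - exists 0%nat. split; [lia|]. rewrite Psi_sa; auto.
    destruct Hor as [-> | H0].
    + replace (RtoC (INR (S m)) * f 0 + f 0) with (RtoC (INR (S m) + 1) * f 0) by (rewrite RtoC_plus; ring).
      apply Cmult_neq_0; auto. intro E. apply RtoC_inj in E. pose proof (pos_INR (S m)). lra.
    + rewrite H0. replace (RtoC (INR (S m)) * 0 + f a) with (f a) by ring. auto.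
Qed.
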